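(* Let $n \ge 1$, $K \ge 1$, let $\mu_1,\dots,\mu_K \in \mathbb{R}^n$, let $\Sigma_1,\dots,\Sigma_K \in \mathbb{R}^{n\times n}$ be symmetric positive-definite matrices, let $\kappa_1,\dots,\kappa_K \in [0,1)$, and let $\epsilon \le 0$. For $k=1,\dots,K$ put $r_k := \sqrt{F^{-1}_{\chi^2_n}(\kappa_k)}$ and define the closed set $$\overline{R} := \bigcup_{k=1}^K \left\{ x \in \mathbb{R}^n \;\middle|\; (x-\mu_k)^T\Sigma_k^{-1}(x-\mu_k) \le r_k^2 \right\}.$$ For $p \in \mathbb{R}^n$ with $p\neq\mu_k$ for all $k$, define $$S(p) := \left\{ x \in \mathbb{R}^n \;\middle|\; \frac{(\mu_k - p)^{T}\Sigma_k^{-1}(x-p)}{\big\|\Sigma_k^{-1/2}(\mu_k - p)\big\|^2} \le \max\!\left(1 - \frac{r_k}{\big\|\Sigma_k^{-1/2}(\mu_k-p)\big\|},\, \epsilon\right) \text{ for all } k=1,\dots,K \right\}.$$ Then for every $p \in \mathbb{R}^n \setminus \overline{R}$, the point $p$ lies in the interior $\mathring{S}(p)$ of $S(p)$, and $\mathring{S}(p) \subseteq \mathbb{R}^n \setminus \overline{R}$.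
   Context: $F_{\chi^2_n}$ denotes the cumulative distribution function of the chi-squared distribution with $n$ degrees of freedom, and $F^{-1}_{\chi^2_n}$ its inverse. $\|\cdot\|$ is the Euclidean norm. For a symmetric positive-definite $\Sigma = V\,\mathrm{diag}(\sigma_1,\dots,\sigma_n)V^T$ (orthogonal $V$, $\sigma_i>0$), $\Sigma^{-1/2} := V\,\mathrm{diag}(\sigma_1^{-1/2},\dots,\sigma_n^{-1/2})V^T$. The set $\overline{R}$ is the approximate confidence region of a Gaussian mixture model (union of the level-$\kappa_k$ confidence ellipsoids of its components $\mathcal N(\mu_k,\Sigma_k)$), and $S(p)$ is the probabilistically safe corridor around $p$, bounded by hyperplanes tangent to these ellipsoids. Note every $p\notin\overline{R}$ automatically satisfies $p\neq\mu_k$ for all $k$. *)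

(* Defs.v *)
From HB Require Import structures.
From mathcomp Require Import all_boot all_order all_algebra.
From mathcomp Require Import all_classical all_reals all_analysis.
Set Implicit Arguments. Unset Strict Implicit. Unset Printing Implicit Defensive.
Import Order.TTheory GRing.Theory Num.Theory.
Import numFieldNormedType.Exports.
Local Open Scope classical_set_scope.
Local Open Scope ring_scope.

Definition chi2_density {R : realType} (n : nat) (t : R) : R :=
  if 0 < t then (t `^ (n%:R / 2 - 1)) * expR (- t / 2) else 0.

(* CDF of chi^2_n : F(x) = (int_0^x density) / (int_0^oo density)
   (the denominator equals 2^(n/2) Gamma(n/2)). *)
Definition chi2_cdf {R : realType} (n : nat) (x : R) : R :=
  fine (\int[lebesgue_measure]_(t in [set t : R | (0 <= t <= x)%R]) ((chi2_density n t)%:E))%E /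
  fine (\int[lebesgue_measure]_(t in [set t : R | (0 <= t)%R]) ((chi2_density n t)%:E))%E.

Definition chi2_inv_cdf {R : realType} (n : nat) (kappa : R) : R :=
  inf [set x : R | 0 <= x /\ kappa <= chi2_cdf n x].

Definition enorm {R : realType} {n : nat} (v : 'cV[R]_n) : R :=
  Num.sqrt (\sum_(i < n) v i 0 ^+ 2).

(* Sigma^{-1/2} := V diag(sigma_1^{-1/2}, ..., sigma_n^{-1/2}) V^T, computed from an
   eigendecomposition Sigma = V diag(sigma) V^T (V orthogonal, sigma_i > 0). *)
Definition inv_sqrt_from {R : realType} {n : nat} (V : 'M[R]_n) (sigma : 'rV[R]_n)
  : 'M[R]_n :=
  V *m diag_mx (\row_i (Num.sqrt (sigma 0 i))^-1) *m V^T.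

Definition sym_posdef {R : realType} {n : nat} (S : 'M[R]_n) : Prop :=
  S^T = S /\ forall x : 'cV[R]_n, x != 0 -> 0 < (x^T *m S *m x) 0 0.

Definition eig_decomp {R : realType} {n : nat} (S V : 'M[R]_n) (sigma : 'rV[R]_n)
  : Prop :=
  V *m V^T = 1%:M /\ V^T *m V = 1%:M /\ (forall i, 0 < sigma 0 i) /\
  S = V *m diag_mx sigma *m V^T.

Definition conf_radius {R : realType} (n : nat) (kappa : R) : R :=
  Num.sqrt (chi2_inv_cdf n kappa).

Definition conf_region {R : realType} {n K : nat} (mu : 'I_K -> 'cV[R]_n)
  (Sigma : 'I_K -> 'M[R]_n) (kappa : 'I_K -> R) : set 'cV[R]_n :=
  [set x | exists k : 'I_K,
     ((x - mu k)^T *m invmx (Sigma k) *m (x - mu k)) 0 0 <= conf_radius n (kappa k) ^+ 2].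

(* The probabilistically safe corridor S(p); SigInvSqrt k plays the role of Sigma_k^{-1/2}. *)
Definition safe_corridor {R : realType} {n K : nat} (mu : 'I_K -> 'cV[R]_n)
  (Sigma SigInvSqrt : 'I_K -> 'M[R]_n) (kappa : 'I_K -> R) (eps : R)
  (p : 'cV[R]_n) : set 'cV[R]_n :=
  [set x | forall k : 'I_K,
     ((mu k - p)^T *m invmx (Sigma k) *m (x - p)) 0 0
       / enorm (SigInvSqrt k *m (mu k - p)) ^+ 2
     <= Num.max (1 - conf_radius n (kappa k) / enorm (SigInvSqrt k *m (mu k - p))) eps].

(* Main.v *)
Require Import Defs.
From HB Require Import structures.
From mathcomp Require Import all_boot all_order all_algebra.
From mathcomp Require Import all_classical all_reals all_analysis.
From mathcomp Require Import ring lra.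
Import Order.TTheory GRing.Theory Num.Theory.
Import numFieldNormedType.Exports.
Local Open Scope classical_set_scope.
Local Open Scope ring_scope.

Section Alg.
Context {R : realType} {n : nat}.
Implicit Types u v w : 'cV[R]_n.

Definition dot u v : R := (u^T *m v) 0 0.

Lemma dot_sum u v : dot u v = \sum_i u i 0 * v i 0.
Proof. by rewrite /dot mxE; apply: eq_bigr => i _; rewrite mxE. Qed.

Lemma dotC u v : dot u v = dot v u.
Proof. by rewrite !dot_sum; apply: eq_bigr => i _; rewrite mulrC. Qed.

Lemma dotDr u v w : dot u (v + w) = dot u v + dot u w.
Proof. by rewrite !dot_sum -big_split; apply: eq_bigr => i _; rewrite mxE mulrDr. Qed.

Lemma dotNr u v : dot u (- v) = - dot u v.
Proof. by rewrite !dot_sum -sumrN; apply: eq_bigr => i _; rewrite mxE mulrN. Qed.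

Lemma dotZr a u v : dot u (a *: v) = a * dot u v.
Proof. by rewrite !dot_sum mulr_sumr; apply: eq_bigr => i _; rewrite mxE mulrCA. Qed.

Lemma dotDl u v w : dot (v + w) u = dot v u + dot w u.
Proof. by rewrite dotC dotDr !(dotC u). Qed.
Lemma dotNl u v : dot (- v) u = - dot v u.
Proof. by rewrite dotC dotNr dotC. Qed.
Lemma dotZl a u v : dot (a *: v) u = a * dot v u.
Proof. by rewrite dotC dotZr dotC. Qed.

Lemma dot_ge0 u : 0 <= dot u u.
Proof. by rewrite dot_sum; apply: sumr_ge0 => i _; rewrite -expr2 sqr_ge0. Qed.

Lemma enorm_sq u : enorm u ^+ 2 = dot u u.
Proof.
rewrite /enorm sqr_sqrtr; last by apply: sumr_ge0 => i _; rewrite sqr_ge0.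
by rewrite dot_sum; apply: eq_bigr => i _; rewrite expr2.
Qed.

Lemma enorm_ge0 u : 0 <= enorm u.
Proof. exact: sqrtr_ge0. Qed.

Lemma quad_dot (A : 'M[R]_n) a b :
  (a^T *m (A^T *m A) *m b) 0 0 = dot (A *m a) (A *m b).
Proof. by rewrite /dot trmx_mul !mulmxA. Qed.

Lemma diag_mul (d e : 'rV[R]_n) :
  diag_mx d *m diag_mx e = diag_mx (\row_i (d 0 i * e 0 i)).
Proof.
apply/matrixP => i j; rewrite mul_diag_mx !mxE.
by case: (i == j); rewrite ?mulr0 ?mulr1n ?mulr0n.
Qed.

Lemma inv_from {S V : 'M[R]_n} {sigma : 'rV[R]_n} :
  eig_decomp S V sigma ->
  invmx S = (inv_sqrt_from V sigma)^T *m inv_sqrt_from V sigma.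
Proof.
move=> [VVt [VtV [sp ->]]].
set D := diag_mx (\row_i (Num.sqrt (sigma 0 i))^-1).
have AT : (inv_sqrt_from V sigma)^T = inv_sqrt_from V sigma.
  by rewrite /inv_sqrt_from !trmx_mul trmxK tr_diag_mx mulmxA.
rewrite AT /inv_sqrt_from.
have -> : V *m D *m V^T *m (V *m D *m V^T)
   = V *m diag_mx (\row_i (sigma 0 i)^-1) *m V^T.
  rewrite -!mulmxA (mulmxA V^T) VtV mul1mx (mulmxA D) /D diag_mul.
  congr (V *m (diag_mx _ *m V^T)); apply/rowP => i; rewrite !mxE.
  rewrite -invfM -expr2 sqr_sqrtr //; exact: ltW.
set X := V *m diag_mx (\row_i (sigma 0 i)^-1) *m V^T.
have SX : V *m diag_mx sigma *m V^T *m X = 1%:M.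
  rewrite /X -!mulmxA (mulmxA V^T) VtV mul1mx (mulmxA (diag_mx sigma)) diag_mul.
  have -> : \row_i (sigma 0 i * (\row_i0 (sigma 0 i0)^-1) 0 i) = const_mx 1 :> 'rV[R]_n.
    by apply/rowP => i; rewrite !mxE divff // gt_eqF.
  by rewrite diag_const_mx mul_scalar_mx scale1r.
have [Su _] := mulmx1_unit SX.
by have := mulKmx Su X; rewrite SX mulmx1.
Qed.

End Alg.
Lemma cont_lin {R : realType} {n} (c : 'rV[R]_n) :
  continuous (fun y : 'cV[R]_n => (c *m y) 0 0).
Proof.
have -> : (fun y : 'cV[R]_n => (c *m y) 0 0) = (fun y => \sum_(i < n) c 0 i * y i 0).
  by apply/funext => y; rewrite mxE.
apply: (@continuous_big _ _ +%R 0 xpredT).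
  exact: add_continuous.
move=> i _ y. exact: (cvgM (cvg_cst (c 0 i)) (@coord_continuous R n 1 i 0 y)).
Qed.

Lemma near_all (T : finType) (X : topologicalType) (x : X) (P : T -> X -> Prop) :
  (forall k, \forall y \near x, P k y) -> \forall y \near x, forall k, P k y.
Proof.
move=> H.
suff : forall s : seq T, \forall y \near x, forall k, k \in s -> P k y.
  by move=> /(_ (enum T)); apply: filterS => y Hy k; apply: Hy; rewrite mem_enum.
elim=> [|a s IH]; first by apply: filterE => y k; rewrite in_nil.
apply: filterS2 (H a) IH => y Ha Hs k; rewrite in_cons => /orP[/eqP -> //|].
exact: Hs.
Qed.


Lemma sub_entry {R : realType} {m n} (M1 M2 : 'M[R]_(m, n)) i j :
  (M1 - M2) i j = M1 i j - M2 i j.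
Proof. by rewrite !mxE. Qed.

Lemma dot_expand {R : realType} {n} (a b : R) (w u : 'cV[R]_n) :
  dot (a *: w - b *: u) (a *: w - b *: u)
  = a ^+ 2 * dot w w - 2 * a * b * dot u w + b ^+ 2 * dot u u.
Proof.
rewrite !(dotDl, dotDr, dotNl, dotNr, dotZl, dotZr) (dotC w u). ring.
Qed.

Lemma cond_equiv (R : realType) (N r f eps : R) : 0 <= r -> r < N -> eps <= 0 ->
  (f / N ^+ 2 <= Num.max (1 - r / N) eps) = (f <= N ^+ 2 - r * N).
Proof.
move=> r0 rN e0.
have N0 : 0 < N by apply: le_lt_trans rN.
have h1 : 0 < 1 - r / N.
  by rewrite subr_gt0 ltr_pdivrMr // mul1r.
rewrite max_l; last by apply: le_trans e0 _; exact: ltW.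
rewrite ler_pdivrMr ?exprn_gt0 //.
suff -> : (1 - r / N) * N ^+ 2 = N ^+ 2 - r * N by [].
by field; rewrite gt_eqF.
Qed.

Theorem proposition2 (R : realType) (n K : nat) (hn : (1 <= n)%N) (hK : (1 <= K)%N)
  (mu : 'I_K -> 'cV[R]_n) (Sigma V : 'I_K -> 'M[R]_n) (sigma : 'I_K -> 'rV[R]_n)
  (kappa : 'I_K -> R) (eps : R)
  (hSigma : forall k, sym_posdef (Sigma k))
  (hdecomp : forall k, eig_decomp (Sigma k) (V k) (sigma k))
  (hkappa : forall k, 0 <= kappa k < 1)
  (heps : eps <= 0) :
  forall p : 'cV[R]_n, ~ conf_region mu Sigma kappa p ->
    let S := safe_corridor mu Sigma (fun k => inv_sqrt_from (V k) (sigma k)) kappa eps p in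
    (interior S) p /\ interior S `<=` ~` conf_region mu Sigma kappa.
Proof.
move=> p hp S.
set A := fun k => inv_sqrt_from (V k) (sigma k).
have hM k : invmx (Sigma k) = (A k)^T *m A k := inv_from (hdecomp k).
set u := fun k => A k *m (mu k - p).
set N := fun k => enorm (u k).
set r := fun k => conf_radius n (kappa k).
have hr k : 0 <= r k by exact: sqrtr_ge0.
have hNu k : N k ^+ 2 = dot (u k) (u k) by exact: enorm_sq.
have hN k : r k < N k.
  have : ~ (((p - mu k)^T *m invmx (Sigma k) *m (p - mu k)) 0 0 <= r k ^+ 2).
    by move=> h; apply: hp; exists k.
  rewrite hM quad_dot -opprB mulmxN dotNl dotNr opprK -/(u k) -hNu.
  move/negP; rewrite -ltNge => h.
  have := hr k; have := enorm_ge0 (u k); rewrite -/(N k) => h1 h2.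
  by rewrite ltNge; apply/negP => h3; nra.
have hS x : S x <-> forall k, dot (u k) (A k *m (x - p)) <= N k ^+ 2 - r k * N k.
  rewrite /S /safe_corridor /=; split => H k; have := H k;
    rewrite hM quad_dot -/(A k) -/(u k) -/(N k) -/(r k) (@cond_equiv _ _ _ _ _ (hr k) (hN k) heps) //.
split.
  rewrite /interior /=.
  have : \forall y \near p, forall k, dot (u k) (A k *m (y - p)) < N k ^+ 2 - r k * N k.
    apply: near_all => k.
    pose c := (u k)^T *m A k.
    have hc : (fun y => (c *m y) 0 0 - (c *m p) 0 0) @ p --> (c *m p) 0 0 - (c *m p) 0 0.
      exact: (cvgB (cont_lin c p) (cvg_cst _)).
    have hpos : (c *m p) 0 0 - (c *m p) 0 0 < N k ^+ 2 - r k * N k.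
      rewrite subrr -mulrBl pmulr_rgt0 ?subr_gt0 //.
      exact: le_lt_trans (hr k) (hN k).
    apply: filterS (cvgr_lt _ hc _ hpos) => y /=.
    by rewrite /dot /c !mulmxBr !mulmxA sub_entry.
  apply: filterS => y Hy; apply/hS => k; exact: ltW.
move=> x Sx [k hk].
have [e e0 he] := (nbhs_ballP _ _).1 Sx.
have {}e0 : 0 < e := e0.
set d := mu k - p.
set t := e / 2 / (`|d| + 1).
have t0 : 0 < t by rewrite /t divr_gt0 ?divr_gt0 // ltr_wpDl.
have : S (x + t *: d).
  apply: he; rewrite -ball_normE /= opprD addrA subrr add0r normrN normrZ.
  rewrite gtr0_norm // /t mulrAC ltr_pdivrMr ?ltr_wpDl //.
  move: (normr_ge0 d) => h; have := mulr_ge0 (ltW e0) h; rewrite mulrAC mulrDr mulr1. move: (e * `|d|) => a ha; lra.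
move/hS => /(_ k).
rewrite addrAC mulmxDr -scalemxAr -/(u k) dotDr dotZr -hNu => hS1.
set w := A k *m (x - p).
move: hk; rewrite hM quad_dot.
have -> : x - mu k = x - p - d by rewrite /d opprB addrA subrK.
rewrite mulmxBr -/w -/(u k).
have E1 := dot_expand 1 1 w (u k); rewrite !scale1r in E1.
rewrite E1 -hNu => hk.
have G := dot_ge0 (N k ^+ 2 *: w - dot (u k) w *: u k).
rewrite dot_expand -hNu in G.
move: hS1 hk G.
set b := dot (u k) w; set q := dot w w; set NN := N k.
have := hN k; have := hr k.
move=> h0 h1 h2 h3 h4.
have NN0 : 0 < NN by apply: le_lt_trans h1.
have h5 : b ^+ 2 <= NN ^+ 2 * q.
  have : 0 <= NN ^+ 2 * (NN ^+ 2 * q - b ^+ 2) by nra.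
  by rewrite pmulr_rge0 ?exprn_gt0 // subr_ge0.
have h6 : r k * NN < NN ^+ 2 - b.
  have := mulr_gt0 t0 (exprn_gt0 2 NN0); move: h2; rewrite -/NN; lra.
have h7 : NN ^+ 2 * (q - 2 * b + NN ^+ 2) <= NN ^+ 2 * r k ^+ 2.
  rewrite ler_pM2l ?exprn_gt0 //.
  by move: h3; rewrite -/(r k) !expr1n !mul1r !mulr1; lra.
have h8 : (r k * NN) ^+ 2 < (NN ^+ 2 - b) ^+ 2.
  have := mulr_ge0 h0 (ltW NN0) => h9.
  nra.
nra.
Qed.
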